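(* Let $\lambda=(\lambda_1,\dots,\lambda_l)$ and $\mu=(\mu_1,\dots,\mu_m)$ be decompositions of $n$ (all parts positive) with $\mu_m\le\lambda_l$. Then $$|P_{\lambda|\mu}|=2^{\mu_m(\lambda_l-\mu_m)}\,|\mathrm{GL}_{\mu_m}(\mathbb{F}_2)|\cdot|P_{\widetilde\lambda|\widetilde\mu}|,$$ where $\widetilde\lambda=(\lambda_1,\dots,\lambda_{l-1},\lambda_l-\mu_m)$ and $\widetilde\mu=(\mu_1,\dots,\mu_{m-1})$, both decompositions of $n-\mu_m$.
   Context: For a decomposition $\lambda=(\lambda_1,\dots,\lambda_l)$ of $N$ (zero parts are omitted; the empty decomposition is the decomposition of $0$, with $\mathrm{GL}_0$ and all associated groups trivial), $P_\lambda\le\mathrm{GL}_N(\mathbb{F}_2)$ is the standard parabolic subgroup of invertible block upper triangular matrices with diagonal blocks of sizes $\lambda_1,\dots,\lambda_l$ in this order. $P_\mu^t$ is the group of transposes of elements of $P_\mu$, and $P_{\lambda|\mu}=P_\lambda\cap P_\mu^t$ for decompositions $\lambda,\mu$ of the same $N$. *)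

(* Defs.v *)
From mathcomp Require Import all_boot all_algebra all_fingroup.
Set Implicit Arguments. Unset Strict Implicit. Unset Printing Implicit Defensive.
Import GRing.Theory.
Local Open Scope ring_scope.

Definition decomposition (N : nat) (lam : seq nat) : bool :=
  all (fun x => 0 < x)%N lam && (sumn lam == N).

(* Block index (0-based) of the row/column index i for the decomposition lam:
   the number of blocks lying entirely before position i. *)
Definition blk (lam : seq nat) (i : nat) : nat :=
  count (fun k => sumn (take k.+1 lam) <= i)%N (iota 0 (size lam)).

Definition blockUT (lam : seq nat) (N : nat) (A : 'M['F_2]_N) : bool :=
  [forall i : 'I_N, forall j : 'I_N, (blk lam j < blk lam i)%N ==> (A i j == 0)].

Definition Parab (lam : seq nat) (N : nat) : {set 'M['F_2]_N} :=
  [set A : 'M['F_2]_N | (A \in unitmx) && blockUT lam A].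

Definition ParabT (mu : seq nat) (N : nat) : {set 'M['F_2]_N} :=
  [set A^T | A in Parab mu N].

Definition Parab2 (lam mu : seq nat) (N : nat) : {set 'M['F_2]_N} :=
  Parab lam N :&: ParabT mu N.

Definition GLset (k : nat) : {set 'M['F_2]_k} := [set A : 'M['F_2]_k | A \in unitmx].

Definition lam_tilde (lam mu : seq nat) : seq nat :=
  filter (fun x => 0 < x)%N (rcons (take (size lam).-1 lam) (last 0 lam - last 0 mu))%N.

Definition mu_tilde (mu : seq nat) : seq nat := take (size mu).-1 mu.

(* Main.v *)
Require Import Defs.
From mathcomp Require Import all_boot all_algebra all_fingroup.
From mathcomp Require Import zify.
Set Implicit Arguments. Unset Strict Implicit. Unset Printing Implicit Defensive.
Import GRing.Theory.

Lemma sumn_take_le n (s : seq nat) : sumn (take n s) <= sumn s.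
Proof. by rewrite -{2}(cat_take_drop n s) sumn_cat leq_addr. Qed.

Lemma blk_rcons s x i : blk (rcons s x) i = blk s i + (sumn s + x <= i).
Proof.
rewrite /blk size_rcons -addn1 iotaD count_cat /= add0n addn0.
congr (_ + _).
  apply: eq_in_count => k; rewrite mem_iota add0n => /andP[_ hk].
  by rewrite -cats1 takel_cat.
by rewrite take_oversize ?size_rcons // sumn_rcons.
Qed.

Lemma blk_le s i : blk s i <= size s.
Proof. by rewrite /blk; have := count_size (fun k => sumn (take k.+1 s) <= i) (iota 0 (size s)); rewrite size_iota. Qed.

Lemma blk_big s i : sumn s <= i -> blk s i = size s.
Proof.
move=> h; rewrite /blk; transitivity (size (iota 0 (size s))); last by rewrite size_iota.
apply/eqP; rewrite -all_count; apply/allP => k _ /=.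
exact: leq_trans (sumn_take_le _ _) h.
Qed.

Lemma blk_small s i : i < sumn s -> blk s i < size s.
Proof.
move=> h.
have hs : 0 < size s by case: s h.
have := count_predC (fun k => sumn (take k.+1 s) <= i) (iota 0 (size s)).
rewrite size_iota /blk.
have : has (predC (fun k => sumn (take k.+1 s) <= i)) (iota 0 (size s)).
  apply/hasP; exists (size s).-1; first by rewrite mem_iota add0n prednK ?leqnn.
  by rewrite /= prednK // take_size -ltnNge.
rewrite has_count; lia.
Qed.
Local Open Scope ring_scope.

Lemma inParabT mu N (A : 'M['F_2]_N) : (A \in ParabT mu N) = (A^T \in Parab mu N).
Proof.
apply/imsetP/idP => [[B hB ->]|h]; first by rewrite trmxK.
by exists A^T => //; rewrite trmxK.
Qed.

Lemma P2P lam mu N (A : 'M['F_2]_N) : A \in Parab2 lam mu N <->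
  [/\ A \in unitmx, (forall i j : 'I_N, (blk lam j < blk lam i)%N -> A i j = 0)
    & (forall i j : 'I_N, (blk mu i < blk mu j)%N -> A i j = 0)].
Proof.
rewrite inE inParabT !inE unitmx_tr /blockUT; split.
  case/andP=> /andP[u /forallP h1] /andP[_ /forallP h2]; split => // i j hij.
    by have /forallP/(_ j)/implyP/(_ hij)/eqP := h1 i.
  by have /forallP/(_ i)/implyP/(_ hij)/eqP := h2 j; rewrite mxE.
case=> u h1 h2; rewrite u /=; apply/andP; split.
  by apply/forallP => i; apply/forallP => j; apply/implyP => hij; rewrite h1.
by apply/forallP => i; apply/forallP => j; apply/implyP => hij; rewrite mxE h2.
Qed.

Lemma mainlem q a k (lam' mu' lamt : seq nat) :
  sumn lam' = q -> sumn mu' = (q + a)%N ->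
  (forall i, (i < q + a)%N -> blk lamt i = blk lam' i) ->
  #|Parab2 (rcons lam' (a+k)) (rcons mu' k) (q+a+k)| =
    (2^(k*a) * #|GLset k| * #|Parab2 lamt mu' (q+a)|)%N.
Proof.
move=> sl su hlt.
have hL : forall i : 'I_(q+a+k), blk (rcons lam' (a+k)) i = blk lam' i.
  move=> i; rewrite blk_rcons sl; have := ltn_ord i; case: leqP => //; lia.
have hU : forall i : 'I_(q+a+k), blk (rcons mu' k) i = blk mu' i.
  move=> i; rewrite blk_rcons su; have := ltn_ord i; case: leqP => //; lia.
have hL1 i : (q <= i)%N -> blk lam' i = size lam' by rewrite -sl; apply: blk_big.
have hL2 i : (i < q)%N -> (blk lam' i < size lam')%N by rewrite -sl; apply: blk_small.
have hU1 i : (q + a <= i)%N -> blk mu' i = size mu' by rewrite -su; apply: blk_big.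
have hU2 i : (i < q + a)%N -> (blk mu' i < size mu')%N by rewrite -su; apply: blk_small.
pose g (x : 'M['F_2]_(q+a) * 'M['F_2]_k * 'M['F_2]_(k,a)) : 'M['F_2]_(q+a+k) :=
  block_mx x.1.1 0 (row_mx 0 x.2) x.1.2.
have ginj : injective g.
  move=> [[M1 D1] C1] [[M2 D2] C2]; rewrite /g /=.
  by case/eq_block_mx => -> _ /eq_row_mx [_ ->] ->.
have -> : Parab2 (rcons lam' (a+k)) (rcons mu' k) (q+a+k) =
    g @: (setX (setX (Parab2 lamt mu' (q+a)) (GLset k)) setT).
  apply/setP => A; apply/idP/imsetP.
    move/P2P => [uA hl hm].
    have ur0 : ursubmx A = 0.
      apply/matrixP => i j; rewrite !mxE; apply: hm.
      rewrite !hU /= (hU1 (q+a+j)) ?leq_addr //; exact: hU2.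
    have dl0 : lsubmx (dlsubmx A) = 0.
      apply/matrixP => i j; rewrite !mxE; apply: hl.
      rewrite !hL /= (hL1 (q+a+i)); last by lia.
      by apply: hL2; rewrite ltn_ord.
    have hA : A = g (ulsubmx A, drsubmx A, rsubmx (dlsubmx A)).
      by rewrite /g /= -ur0 -dl0 hsubmxK submxK.
    have := uA; rewrite hA /g /= unitmxE det_lblock unitrM -!unitmxE => /andP[u1 u2].
    exists (ulsubmx A, drsubmx A, rsubmx (dlsubmx A)) => //.
    apply/setXP; split; last by rewrite inE.
    apply/setXP; split; last by rewrite inE.
    apply/P2P; split => // i j h; rewrite !mxE.
      by apply: hl; rewrite !hL /= -!hlt.
    by apply: hm; rewrite !hU.
  move=> [[[M D] C] /setXP [/setXP [MP DG] _] ->].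
  move/P2P: MP => [uM hlM hmM]; move: DG; rewrite inE => uD.
  apply/P2P; split.
  - by rewrite /g /= unitmxE det_lblock unitrM -!unitmxE uM uD.
  - move=> i j; rewrite -(splitK i) -(splitK j).
    case: (split i) => [i1|i2]; case: (split j) => [j1|j2]; rewrite !hL /=.
    + by rewrite block_mxEul -!hlt // => /hlM.
    + by rewrite block_mxEur mxE.
    + rewrite block_mxEdl -(splitK j1); case: (split j1) => [j3|j4] /=.
        by rewrite row_mxEl mxE.
      rewrite (hL1 (q + j4)) ?leq_addr // (hL1 (q + a + i2)); first by rewrite ltnn.
      lia.
    + rewrite (hL1 (q + a + i2)) ?(hL1 (q + a + j2)) ?ltnn //; lia.
  - move=> i j; rewrite -(splitK i) -(splitK j).
    case: (split i) => [i1|i2]; case: (split j) => [j1|j2]; rewrite !hU /=.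
    + by rewrite block_mxEul => /hmM.
    + by rewrite block_mxEur mxE.
    + rewrite (hU1 (q + a + i2)) ?leq_addr // ltnNge blk_le //.
    + rewrite (hU1 (q + a + i2)) ?(hU1 (q + a + j2)) ?ltnn ?leq_addr //.
rewrite card_imset // !cardsX cardsT card_mx card_Fp //.
by rewrite [LHS]mulnC [X in (2 ^ _ * X)%N]mulnC mulnA.
Qed.

Theorem proposition1 (n : nat) (lam mu : seq nat) :
  decomposition n lam -> decomposition n mu ->
  lam != [::] -> mu != [::] ->
  (last 0 mu <= last 0 lam)%N ->
  #|Parab2 lam mu n| =
    (2 ^ (last 0 mu * (last 0 lam - last 0 mu)) * #|GLset (last 0 mu)|
     * #|Parab2 (lam_tilde lam mu) (mu_tilde mu) (n - last 0 mu)|)%N.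
Proof.
move=> dl dm; case/lastP: lam dl => [//|lam' x] dl _.
case/lastP: mu dm => [//|mu' k] dm _.
rewrite !last_rcons => hkx.
have [a ex] : exists a, x = (a + k)%N by exists (x - k)%N; rewrite subnK.
subst x.
move/andP: dl => [pl /eqP sl]; move/andP: dm => [_ /eqP sm].
rewrite sumn_rcons in sl sm.
subst n.
rewrite /lam_tilde /mu_tilde !size_rcons /= -!cats1 !take_size_cat // !cats1.
rewrite !last_rcons addnK addnA addnK.
apply: mainlem => //.
  rewrite sumn_rcons in sm; lia.
move=> i hi.
rewrite all_rcons in pl; case/andP: pl => _ /all_filterP pl.
rewrite filter_rcons pl; case: ifP => // ha.
rewrite blk_rcons; case: leqP => //; lia.
Qed.
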